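(* Assume the Margin assumption and Boundedness. For agents $A_0,\dots,A_T\in\mathcal{A}$, let $(y_t,b_t)$ be generated by the projected strategic perceptron with $\mathbb{L}=\mathbb{R}^d\times\mathbb{R}$ and $\gamma=1$, and let $\mathcal{M}_T$ be its set of mistake times. Then $$\sum_{t\in\mathcal{M}_T}L_{\mathrm{hinge}}\Big(\big(\tfrac{y_*}{d_*\|y_*\|_*},\tfrac{b_*}{d_*\|y_*\|_*}\big);(s(A_t,y_t,b_t),1),\ell(A_t)\Big)\le\frac{2}{cd_*}|\mathcal{M}_T|,$$ and consequently $$|\mathcal{M}_T|\le\frac{\|y_*\|_2^2+b_*^2}{\|y_*\|_*^2}\cdot\frac{\widetilde D^2+1}{\max\{0,d_*-2/c\}^2}$$ (in particular $|\mathcal{M}_T|$ is bounded independently of $T$ when $d_*>2/c$).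
   Context: Setting: $\mathcal{A}\subseteq\mathbb{R}^d$, labels $\ell(A)\in\{\pm1\}$; $\operatorname{sign}(0)=+1$; norm $\|\cdot\|$ with dual $\|y\|_*=\max_{\|w\|\le1}y^\top w$; constant $c>0$; a fixed selection $v$ with $v(0)=0$ and $v(y)\in\arg\max_{\|w\|\le1}y^\top w$ for $y\ne0$, with $v(\lambda y)=v(y)$ for $\lambda>0$. Predicted label $\hat\ell(x,y,b)=\operatorname{sign}(y^\top x+b-2\|y\|_*/c)$. Response: for $y\ne0$, $r(A,y,b)=A+(\tfrac2c-\tfrac{y^\top A+b}{\|y\|_*})v(y)$ if $0\le\tfrac{y^\top A+b}{\|y\|_*}<\tfrac2c$, else $A$. Proxy: for $y\ne0$, $s(A,y,b)=A-\tfrac{y^\top A+b}{\|y\|_*}v(y)$ if $0\le\tfrac{y^\top A+b}{\|y\|_*}<\tfrac2c$ and $\ell(A)=-1$; $=A+(\tfrac2c-\tfrac{y^\top A+b}{\|y\|_*})v(y)$ if the range condition holds and $\ell(A)=+1$; $=A$ otherwise; $r(A,0,b)=s(A,0,b)=A$. Margin assumption: $d_*:=\max_{y\ne0,b}\min_{A\in\mathcal{A}}\ell(A)\frac{y^\top A+b}{\|y\|_*}$ attained at $(y_*,b_* )$, $y_*\ne0$, $d_*>0$. Boundedness: $D:=\sup_{A\in\mathcal{A}}\|A\|_2<\infty$; $C_{\|\cdot\|}=\max_y\|v(y)\|_2$; $\widetilde D=D+\tfrac2cC_{\|\cdot\|}$. Hinge loss $L_{\mathrm{hinge}}(q;\xi,\ell)=\max\{0,1-\ell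 q^\top\xi\}$. Projected strategic perceptron with closed convex cone $\mathbb{L}$ and stepsize $\gamma$: $q_0=(y_0,b_0)=(0,0)$; for $t=0,\dots,T$: agent $A_t$ is shown $(y_t,b_t)$, responds $r(A_t,y_t,b_t)$, is predicted $\hat\ell(r(A_t,y_t,b_t),y_t,b_t)$; with $\xi_t=(s(A_t,y_t,b_t),1)$, $z_{t+1}=q_t+\gamma\ell(A_t)\xi_t$ on a mistake, else $z_{t+1}=q_t$; $q_{t+1}=(y_{t+1},b_{t+1})=\Pi_{\mathbb{L}}(z_{t+1})$. Mistake set $\mathcal{M}_T=\{t\in\{0,\dots,T\}:\hat\ell(r(A_t,y_t,b_t),y_t,b_t)\ne\ell(A_t)\}$. *)

(* Defs.v *)
From HB Require Import structures.
From mathcomp Require Import all_boot all_order all_algebra.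
From mathcomp Require Import classical_sets reals.
Set Implicit Arguments. Unset Strict Implicit. Unset Printing Implicit Defensive.
Import Order.TTheory GRing.Theory Num.Theory.
Local Open Scope ring_scope.
Local Open Scope classical_set_scope.

Section Defs.
Variables (R : realType) (d : nat).
Notation vec := 'rV[R]_d.

Definition dot (x y : vec) : R := \sum_(i < d) x 0 i * y 0 i.

Definition norm2 (x : vec) : R := Num.sqrt (dot x x).

Definition is_norm (N : vec -> R) : Prop :=
  [/\ forall x, 0 <= N x,
      forall x, N x = 0 -> x = 0,
      forall (a : R) x, N (a *: x) = `|a| * N x &
      forall x y, N (x + y) <= N x + N y].

Definition dualnorm (N : vec -> R) (y : vec) : R :=
  sup [set dot y w | w in [set w | N w <= 1]].

Definition is_dual_selection (N : vec -> R) (v : vec -> vec) : Prop :=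
  [/\ v 0 = 0,
      forall y, y != 0 -> N (v y) <= 1 /\
                 (forall w, N w <= 1 -> dot y w <= dot y (v y)) &
      forall (lam : R) y, 0 < lam -> v (lam *: y) = v y].

Definition sgn (x : R) : R := if 0 <= x then 1 else -1.

Variables (N : vec -> R) (v : vec -> vec) (c : R) (lab : vec -> R).

Notation Nd := (dualnorm N).

Definition pred_label (x y : vec) (b : R) : R :=
  sgn (dot y x + b - 2 * Nd y / c).

Definition resp (A y : vec) (b : R) : vec :=
  if y == 0 then A else
  let m := (dot y A + b) / Nd y in
  if (0 <= m) && (m < 2 / c) then A + (2 / c - m) *: v y else A.

Definition proxy (A y : vec) (b : R) : vec :=
  if y == 0 then A else
  let m := (dot y A + b) / Nd y in
  if (0 <= m) && (m < 2 / c) then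
    (if lab A == -1 then A - m *: v y
     else if lab A == 1 then A + (2 / c - m) *: v y else A)
  else A.

Definition mistake (A y : vec) (b : R) : bool :=
  pred_label (resp A y b) y b != lab A.

(* projected strategic perceptron with projection proj (onto the cone L)
   and stepsize gamma; returns q_t = (y_t, b_t) *)
Fixpoint perceptron (proj : vec * R -> vec * R) (gamma : R)
    (Ag : nat -> vec) (t : nat) : vec * R :=
  match t with
  | 0 => (0, 0)
  | t'.+1 =>
    let q := perceptron proj gamma Ag t' in
    let A := Ag t' in
    let z := if mistake A q.1 q.2
             then (q.1 + (gamma * lab A) *: proxy A q.1 q.2,
                   q.2 + gamma * lab A * 1)
             else q in
    proj z
  end.

Definition margin (Ag : set vec) (y : vec) (b : R) : R :=
  inf [set lab A * (dot y A + b) / Nd y | A in Ag].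

End Defs.

(* hinge loss L(q; xi, l) = max{0, 1 - l q^T xi}, q = (qy,qb), xi = (xs,x1) *)
Definition hinge (R : realType) (d : nat) (qy : 'rV[R]_d) (qb : R)
  (xs : 'rV[R]_d) (x1 : R) (l : R) : R :=
  Num.max 0 (1 - l * (dot qy xs + qb * x1)).

(* Main.v *)
Require Import Defs.
From HB Require Import structures.
From mathcomp Require Import all_boot all_order all_algebra.
From mathcomp Require Import classical_sets reals boolp.
From mathcomp Require Import ring lra.
Import Order.TTheory GRing.Theory Num.Theory.
Local Open Scope ring_scope.
Local Open Scope classical_set_scope.

Section Aux.
Variables (R : realType) (d : nat).
Implicit Types x y z w : 'rV[R]_d.

Lemma dotC x y : dot x y = dot y x.
Proof. by apply: eq_bigr => i _; rewrite mulrC. Qed.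

Lemma dotDl x y z : dot (x + y) z = dot x z + dot y z.
Proof. by rewrite /dot -big_split; apply: eq_bigr => i _; rewrite mxE mulrDl. Qed.

Lemma dotZl (a : R) x z : dot (a *: x) z = a * dot x z.
Proof. by rewrite /dot mulr_sumr; apply: eq_bigr => i _; rewrite mxE mulrA. Qed.

Lemma dotDr x y z : dot z (x + y) = dot z x + dot z y.
Proof. by rewrite dotC dotDl !(dotC z). Qed.

Lemma dotZr (a : R) x z : dot z (a *: x) = a * dot z x.
Proof. by rewrite dotC dotZl dotC. Qed.

Lemma dot0l z : dot 0 z = 0.
Proof. by rewrite -(scale0r (0 : 'rV[R]_d)) dotZl mul0r. Qed.

Lemma dotxx_ge0 x : 0 <= dot x x.
Proof. by apply: sumr_ge0 => i _; rewrite -expr2 sqr_ge0. Qed.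

Lemma dotxx_eq0 x : dot x x = 0 -> x = 0.
Proof.
move=> /eqP; rewrite psumr_eq0; last by move=> i _; rewrite -expr2 sqr_ge0.
move=> /allP H; apply/rowP => i; rewrite mxE.
have := H i (mem_index_enum _); rewrite /= mulf_eq0 orbb => /eqP //.
Qed.

Lemma dot_CS x y : dot x y ^+ 2 <= dot x x * dot y y.
Proof.
have H := dotxx_ge0 (dot y y *: x - dot x y *: y).
rewrite !(dotDl, dotDr, dotZl, dotZr) -!scaleNr !(dotZl, dotZr) (dotC y x) in H.
have Hy := dotxx_ge0 y.
case: (ltrgtP (dot y y) 0) => [|Hp|H0]; first by rewrite ltNge Hy.
  rewrite -(ler_pM2l Hp). nra.
have y0 : y = 0 by apply: dotxx_eq0.
by rewrite y0 dotC !dot0l expr2 !mulr0.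
Qed.

Lemma norm2_sq x : norm2 x ^+ 2 = dot x x.
Proof. by rewrite /norm2 sqr_sqrtr // dotxx_ge0. Qed.

Lemma norm2_ge0 x : 0 <= norm2 x.
Proof. exact: sqrtr_ge0. Qed.

Lemma dot_le_norm x y : `|dot x y| <= norm2 x * norm2 y.
Proof.
rewrite -(ler_pXn2r (_ : 0 < 2)%N) ?nnegrE ?mulr_ge0 ?norm2_ge0 //.
by rewrite real_normK ?num_real // exprMn !norm2_sq dot_CS.
Qed.

End Aux.
Section Dual.
Variables (R : realType) (d : nat) (N : 'rV[R]_d -> R) (v : 'rV[R]_d -> 'rV[R]_d).
Hypotheses (HN : is_norm N) (Hv : is_dual_selection N v).
Implicit Types x y z w : 'rV[R]_d.

Lemma N0 : N 0 = 0.
Proof.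
case: HN => _ _ HZ _.
by rewrite -(scale0r (0 : 'rV[R]_d)) HZ normr0 mul0r.
Qed.

Lemma NN x : N (- x) = N x.
Proof.
case: HN => _ _ HZ _.
by rewrite -scaleN1r HZ normrN normr1 mul1r.
Qed.

Lemma Nv y : N (v y) <= 1.
Proof.
case: Hv => v0 Hs _.
have [->|y0] := eqVneq y 0; first by rewrite v0 N0.
by case: (Hs y y0).
Qed.

Lemma vsel_ub y w : N w <= 1 -> dot y w <= dot y (v y).
Proof.
case: Hv => v0 Hs _.
have [->|y0] := eqVneq y 0; first by rewrite !dot0l.
by case: (Hs y y0) => _; apply.
Qed.

Lemma dualE y : dualnorm N y = dot y (v y).
Proof.
have ne : [set dot y w | w in [set w | N w <= 1]] !=set0.
  by exists (dot y (v y)); exists (v y) => //; exact: Nv.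
have ub : ubound [set dot y w | w in [set w | N w <= 1]] (dot y (v y)).
  by move=> _ [w Hw <-]; exact: vsel_ub.
apply/eqP; rewrite eq_le; apply/andP; split.
  by apply: ge_sup.
apply: sup_upper_bound; first by split => //; exists (dot y (v y)).
by exists (v y) => //; exact: Nv.
Qed.

Lemma dual_ub y w : N w <= 1 -> dot y w <= dualnorm N y.
Proof. by rewrite dualE; exact: vsel_ub. Qed.

Lemma dual_ge0 y : 0 <= dualnorm N y.
Proof. by rewrite -(dot0l R d y) dotC; apply: dual_ub; rewrite N0. Qed.

Lemma dual_gt0 y : y != 0 -> 0 < dualnorm N y.
Proof.
move=> y0; case: HN => Hge Hz HZ _.
have Ny : 0 < N y.
  rewrite lt_def Hge andbT; apply/eqP => /Hz /eqP; exact/negP.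
have : dot y ((N y)^-1 *: y) <= dualnorm N y.
  apply: dual_ub; rewrite HZ ger0_norm; first by rewrite mulVf ?lt0r_neq0.
  by rewrite invr_ge0 ltW.
move=> H; apply: lt_le_trans H; rewrite dotZr mulr_gt0 ?invr_gt0 //.
rewrite lt_def dotxx_ge0 andbT; apply/eqP => /dotxx_eq0 /eqP; exact/negP.
Qed.

Lemma dot_v_bound x y : `|dot x (v y)| <= dualnorm N x.
Proof.
rewrite ler_norml; apply/andP; split; last by apply: dual_ub; exact: Nv.
rewrite lerNl -(mulN1r (dot x (v y))) -dotZr scaleN1r.
by apply: dual_ub; rewrite NN; exact: Nv.
Qed.

Definition ei (i : 'I_d) : 'rV[R]_d := \row_j ((i == j)%:R).

Lemma dot_ei i w : dot (ei i) w = w 0 i.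
Proof.
rewrite /dot (bigD1 i) //= big1 => [|j ji]; first by rewrite !mxE eqxx mul1r addr0.
by rewrite !mxE eq_sym (negbTE ji) mul0r.
Qed.

Lemma v_bounded : has_ubound (range (fun y => norm2 (v y))).
Proof.
pose k i := dualnorm N (ei i) + dualnorm N (- ei i).
have Hk : forall w i, N w <= 1 -> `|w 0 i| <= k i.
  move=> w i Hw; rewrite ler_norml; apply/andP; split.
    rewrite lerNl -dot_ei -mulN1r -dotZl scaleN1r.
    by rewrite /k -(add0r (dot _ _)) lerD ?dual_ub ?dual_ge0.
  by rewrite /k -dot_ei -(addr0 (dot _ _)) lerD ?dual_ub ?dual_ge0.
exists (Num.sqrt (\sum_i k i ^+ 2)) => _ [y _ <-].
rewrite /norm2 ler_sqrt ?sumr_ge0 // => [|i _]; last by rewrite sqr_ge0.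
apply: ler_sum => i _; rewrite -expr2 -real_normK ?num_real //.
rewrite ler_pXn2r ?nnegrE ?normr_ge0 //; first exact: Hk (Nv y).
exact: le_trans (normr_ge0 _) (Hk _ i (Nv y)).
Qed.

Lemma norm2_v_le y : norm2 (v y) <= sup (range (fun y => norm2 (v y))).
Proof.
apply: sup_upper_bound; last by exists y.
by split; [exists (norm2 (v y)); exists y|exact: v_bounded].
Qed.

End Dual.
Section Model.
Variables (R : realType) (d : nat) (N : 'rV[R]_d -> R) (v : 'rV[R]_d -> 'rV[R]_d)
  (c : R) (lab : 'rV[R]_d -> R).
Hypotheses (HN : is_norm N) (Hv : is_dual_selection N v) (c0 : 0 < c).
Implicit Types x y z w A : 'rV[R]_d.

Lemma proxy_form A y b : exists2 al : R, `|al| <= 2 / c &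
  proxy N v c lab A y b = A + al *: v y.
Proof.
have c2 : 0 < 2 / c by rewrite divr_gt0.
rewrite /proxy; case: eqP => _; first by exists 0; [rewrite normr0 ltW | rewrite scale0r addr0].
set m := ((dot y A + b) / _); case: ifP => [/andP [m0 m2]|_]; last first.
  by exists 0; [rewrite normr0 ltW | rewrite scale0r addr0].
case: eqP => _.
  exists (- m); last by rewrite scaleNr.
  rewrite normrN ger0_norm //; exact: ltW.
case: eqP => _; last by exists 0; [rewrite normr0 ltW | rewrite scale0r addr0].
exists (2 / c - m) => //.
rewrite ger0_norm; last by rewrite subr_ge0 ltW.
by rewrite lerBlDr lerDl.
Qed.

Lemma sgn_cases (x : R) : (sgn x = 1 /\ 0 <= x) \/ (sgn x = -1 /\ x < 0).
Proof. by rewrite /sgn; case: ifP => H; [left|right; rewrite ltNge H]. Qed.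

Lemma mistake_neg A y b : (lab A = 1 \/ lab A = -1) ->
  mistake N v c lab A y b ->
  lab A * (dot y (proxy N v c lab A y b) + b) <= 0.
Proof.
move=> Hl; rewrite /mistake /pred_label /resp /proxy.
have [->|y0] := eqVneq y 0.
  rewrite (dualE _ _ _ _ HN Hv) !dot0l mulr0 mul0r subr0 add0r.
  case: (sgn_cases b) => [[-> Hb]|[-> Hb]] /eqP H; case: Hl => Hl; rewrite Hl in H *;
    rewrite ?eqxx // in H; lra.
have n0 := dual_gt0 _ _ _ _ HN Hv _ y0.
set n := dualnorm N y in n0 *.
have Hn : dot y (v y) = n by rewrite /n (dualE _ _ _ _ HN Hv).
set m := (_ / n).
have XE : dot y A + b = m * n by rewrite /m divfK // gt_eqF.
have E2 : 2 * n / c = 2 / c * n by rewrite mulrAC.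
case: ifP => [/andP [m0 m2]|Hr].
  rewrite dotDr dotZr Hn.
  have -> : dot y A + (2 / c - m) * n + b - 2 * n / c = 0.
    by rewrite mulrBl -E2; lra.
  rewrite /sgn lexx => /eqP H.
  have Hl' : lab A = -1 by case: Hl => // Hl; rewrite Hl in H.
  rewrite Hl' eqxx dotDr -scaleNr dotZr Hn mulNr; lra.
rewrite XE E2.
have c2 : 0 < 2 / c by rewrite divr_gt0.
case: (sgn_cases (m * n - 2 / c * n)) => [[-> Hb]|[-> Hb]] /eqP H;
  case: Hl => Hl; rewrite Hl in H *; rewrite ?eqxx // in H.
  nra.
case: (lerP 0 m) => Hm.
  have : m < 2 / c by nra.
  by move=> Hm2; rewrite Hm Hm2 in Hr.
nra.
Qed.

Lemma margin_lb (Aset : set 'rV[R]_d) ys bs A :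
  0 < margin N lab Aset ys bs -> Aset A ->
  margin N lab Aset ys bs <= lab A * (dot ys A + bs) / dualnorm N ys.
Proof.
rewrite /margin => Hm HA.
set S := [set _ | _ in _] in Hm *.
have hl : has_lbound S.
  apply: contrapT => H; move: Hm; rewrite inf_out ?ltxx // => -[_ ?]; exact: H.
by apply: ge_inf => //; exists A.
Qed.

End Model.
Section Steps.
Variables (R : realType) (d : nat) (N : 'rV[R]_d -> R) (v : 'rV[R]_d -> 'rV[R]_d)
  (c : R) (lab : 'rV[R]_d -> R).
Hypotheses (HN : is_norm N) (Hv : is_dual_selection N v) (c0 : 0 < c).
Implicit Types x y z w A : 'rV[R]_d.

Lemma gain (Aset : set 'rV[R]_d) ys bs A y b :
  ys != 0 -> 0 < margin N lab Aset ys bs -> Aset A -> (lab A = 1 \/ lab A = -1) ->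
  dualnorm N ys * (margin N lab Aset ys bs - 2 / c) <=
  lab A * (dot ys (proxy N v c lab A y b) + bs).
Proof.
move=> ys0 Hm HA Hl.
have n0 := dual_gt0 _ _ _ _ HN Hv _ ys0.
have := margin_lb _ _ _ _ _ _ _ _ Hm HA; rewrite ler_pdivlMr // => Hmg.
have [al Hal ->] := proxy_form _ _ N v c lab c0 A y b.
rewrite dotDr dotZr.
have Ht := dot_v_bound _ _ _ _ HN Hv ys y.
set t := dot ys (v y) in Ht *.
set n := dualnorm N ys in n0 Ht Hmg *.
set X := dot ys A in Hmg *.
set dm := margin _ _ _ _ _ in Hmg *.
have Hp : `|al * t| <= 2 / c * n.
  by rewrite normrM ler_pM ?normr_ge0.
move: Hp; rewrite ler_norml => /andP [Hp1 Hp2].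
case: Hl => Hl; rewrite Hl ?mul1r ?mulN1r in Hmg *; rewrite mulrBr (mulrC n) (mulrC n); lra.
Qed.

Lemma proxy_sq A y b (D : R) :
  norm2 A <= D ->
  dot (proxy N v c lab A y b) (proxy N v c lab A y b) <=
  (D + 2 / c * sup (range (fun y => norm2 (v y)))) ^+ 2.
Proof.
move=> HA.
have [al Hal ->] := proxy_form _ _ N v c lab c0 A y b.
have Hw := norm2_v_le _ _ _ _ HN Hv y.
set C := sup _ in Hw *.
have Ht := dot_le_norm _ _ A (v y).
rewrite !(dotDl, dotDr, dotZl, dotZr) (dotC _ _ (v y) A) -!norm2_sq.
set t := dot A (v y) in Ht *.
set a := norm2 A in HA Ht *.
set w := norm2 (v y) in Hw Ht *.
have a0 : 0 <= a := norm2_ge0 _ _ A.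
have w0 : 0 <= w := norm2_ge0 _ _ (v y).
set u := `|al| * w.
have h1 : al * t <= a * u.
  apply: le_trans (ler_norm _) _; rewrite normrM /u mulrCA.
  by apply: ler_pM; rewrite ?normr_ge0 ?lexx.
have u0 : 0 <= u by rewrite mulr_ge0 ?normr_ge0.
have h2 : u <= 2 / c * C by rewrite /u; apply: ler_pM; rewrite ?normr_ge0.
have h4 : (a + u) ^+ 2 <= (D + 2 / c * C) ^+ 2.
  rewrite lerXn2r ?nnegrE ?addr_ge0 ?lerD //.
  exact: le_trans HA.
  exact: le_trans h2.
apply: le_trans h4.
have -> : al * (al * w ^+ 2) = u ^+ 2 by rewrite /u exprMn real_normK ?num_real // expr2 mulrA.
nra.
Qed.

End Steps.

Lemma cs2 (R : realType) (t a u b e : R) : `|t| <= a * u -> 0 <= a -> 0 <= u ->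
  (t + b * e) ^+ 2 <= (a ^+ 2 + b ^+ 2) * (u ^+ 2 + e ^+ 2).
Proof.
move=> Ht a0 u0.
have h1 : `|t + b * e| <= a * u + `|b| * `|e|.
  by apply: le_trans (ler_normD _ _) _; rewrite normrM lerD.
have h2 : (t + b * e) ^+ 2 <= (a * u + `|b| * `|e|) ^+ 2.
  rewrite -real_normK ?num_real // lerXn2r ?nnegrE ?normr_ge0 //.
  by apply: le_trans (normr_ge0 _) h1.
apply: le_trans h2 _.
rewrite -(real_normK (num_real b)) -(real_normK (num_real e)).
set B := `|b|; set E := `|e|.
rewrite -subr_ge0.
have -> : (a ^+ 2 + B ^+ 2) * (u ^+ 2 + E ^+ 2) - (a * u + B * E) ^+ 2 = (a * E - B * u) ^+ 2 by ring.
exact: sqr_ge0.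
Qed.

Theorem mainTheorem16 (R : realType) (d : nat)
  (N : 'rV[R]_d -> R) (v : 'rV[R]_d -> 'rV[R]_d) (c : R)
  (Aset : set 'rV[R]_d) (lab : 'rV[R]_d -> R)
  (ystar : 'rV[R]_d) (bstar : R) (Ag : nat -> 'rV[R]_d) (T : nat) :
  is_norm N ->
  is_dual_selection N v ->
  0 < c ->
  (forall A, Aset A -> lab A = 1 \/ lab A = -1) ->
  (* margin assumption *)
  ystar != 0 ->
  (forall y b, y != 0 -> margin N lab Aset y b <= margin N lab Aset ystar bstar) ->
  0 < margin N lab Aset ystar bstar ->
  (* boundedness *)
  (exists M : R, forall A, Aset A -> norm2 A <= M) ->
  (* agents *)
  (forall t, (t <= T)%N -> Aset (Ag t)) ->
  let dstar := margin N lab Aset ystar bstar in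
  let Nd := dualnorm N in
  let D := sup [set norm2 A | A in Aset] in
  let C := sup (range (fun y => norm2 (v y))) in
  let Dt := D + 2 / c * C in
  let q := perceptron N v c lab id 1 Ag in
  let mis := fun t => mistake N v c lab (Ag t) (q t).1 (q t).2 in
  let MT := [seq t <- iota 0 T.+1 | mis t] in
  (\sum_(t <- MT)
      hinge ((dstar * Nd ystar)^-1 *: ystar) (bstar / (dstar * Nd ystar))
            (proxy N v c lab (Ag t) (q t).1 (q t).2) 1 (lab (Ag t))
     <= 2 / (c * dstar) * (size MT)%:R)
  /\
  (2 / c < dstar ->
     (size MT)%:R <= (norm2 ystar ^+ 2 + bstar ^+ 2) / Nd ystar ^+ 2
                     * ((Dt ^+ 2 + 1) / Num.max 0 (dstar - 2 / c) ^+ 2)).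
Proof.
move=> HN Hv c0 Hlab ys0 _ Hm0 [M HM] HAg dstar Nd D C Dt q mis MT.
have n0 : 0 < Nd ystar := dual_gt0 _ _ _ _ HN Hv _ ys0.
have c2 : 0 < 2 / c by rewrite divr_gt0.
have HD : forall t, (t <= T)%N -> norm2 (Ag t) <= D.
  move=> t Ht; apply: sup_upper_bound; last by exists (Ag t); [exact: HAg|].
  split; first by exists (norm2 (Ag 0)); exists (Ag 0) => //; exact: HAg.
  by exists M => _ [A HA <-]; exact: HM.
have HG : forall t y b, (t <= T)%N -> Nd ystar * (dstar - 2 / c) <=
    lab (Ag t) * (dot ystar (proxy N v c lab (Ag t) y b) + bstar).
  move=> t y b Ht; apply: gain => //; [exact: HAg | exact: Hlab (HAg _ Ht)].
split.
  have Hb : forall t, t \in MT -> hinge ((dstar * Nd ystar)^-1 *: ystar) (bstar / (dstar * Nd ystar))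
            (proxy N v c lab (Ag t) (q t).1 (q t).2) 1 (lab (Ag t)) <= 2 / (c * dstar).
    move=> t; rewrite mem_filter mem_iota add0n => /andP [_ Ht].
    have := HG t (q t).1 (q t).2 Ht.
    set s := proxy _ _ _ _ _ _ _.
    set P := lab _ * _ => HP.
    rewrite /hinge ge_max; apply/andP; split; first by rewrite ltW // divr_gt0 // mulr_gt0.
    set k := (dstar * Nd ystar)^-1.
    have -> : 1 - lab (Ag t) * (dot (k *: ystar) s + bstar / (dstar * Nd ystar) * 1) = 1 - k * P.
      by rewrite dotZl /P /k; ring.
    have k0 : 0 < k by rewrite invr_gt0 mulr_gt0.
    have : k * (Nd ystar * (dstar - 2 / c)) <= k * P by rewrite ler_pM2l.
    have -> : k * (Nd ystar * (dstar - 2 / c)) = 1 - 2 / (c * dstar).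
      rewrite /k; field; rewrite ?gt_eqF //; apply/andP; split; rewrite gt_eqF //.
    lra.
  rewrite big_seq; apply: le_trans (ler_sum _ Hb) _.
  by rewrite -big_seq big_const_seq count_predT iter_addr_0 mulr_natr.
move=> Hg.
set n := Nd ystar in n0 HG *.
have g0 : 0 < dstar - 2 / c by rewrite subr_gt0.
set g := dstar - 2 / c in g0 HG *.
set Rr := Dt ^+ 2 + 1.
have qS : forall t, q t.+1 = if mis t then
    ((q t).1 + lab (Ag t) *: proxy N v c lab (Ag t) (q t).1 (q t).2, (q t).2 + lab (Ag t))
    else q t.
  by move=> t; rewrite [q t.+1]/q /= mul1r mulr1.
have claim : forall t, (t <= T.+1)%N ->
  (count mis (iota 0 t))%:R * (n * g) <= dot (q t).1 ystar + (q t).2 * bstar /\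
  dot (q t).1 (q t).1 + (q t).2 ^+ 2 <= (count mis (iota 0 t))%:R * Rr.
  elim => [_|t IH Ht].
    have -> : q 0 = (0, 0) by [].
    by rewrite /= !dot0l !mul0r expr0n /= addr0 lexx.
  have [IH1 IH2] := IH (ltnW Ht).
  rewrite qS -addn1 iotaD count_cat /= addn0 natrD.
  case Hmt: (mis t) => /=; last by rewrite addr0.
  have Hl := Hlab _ (HAg _ Ht).
  have G := HG t (q t).1 (q t).2 Ht.
  have Mn := mistake_neg _ _ _ _ _ _ HN Hv c0 _ _ _ Hl Hmt.
  have Ss := proxy_sq _ _ _ _ _ lab HN Hv c0 (Ag t) (q t).1 (q t).2 _ (HD t Ht).
  set s := proxy _ _ _ _ _ _ _ in G Mn Ss *.
  have Ss' : dot s s <= Dt ^+ 2 := Ss.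
  rewrite !(dotDl, dotDr, dotZl, dotZr) (dotC _ _ s ystar) (dotC _ _ s (q t).1).
  rewrite /Rr in IH2 *; set K := (count _ _)%:R in IH1 IH2 *.
  case: Hl => Hl; rewrite Hl in G Mn *; rewrite sqrrD; split; lra.
have [C1 C2] := claim T.+1 (leqnn _).
have Kdef : (size MT)%:R = (count mis (iota 0 T.+1))%:R :> R by rewrite size_filter.
rewrite Kdef (max_r (ltW g0)).
set K := (count mis _)%:R in C1 C2 *.
set y := (q T.+1).1 in C1 C2. set b := (q T.+1).2 in C1 C2.
have CS := cs2 _ _ _ _ b bstar (dot_le_norm _ _ y ystar) (norm2_ge0 _ _ y) (norm2_ge0 _ _ ystar).
rewrite !norm2_sq in CS; rewrite norm2_sq.
set U := dot ystar ystar + bstar ^+ 2 in CS *.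
have U0 : 0 <= U by rewrite addr_ge0 ?dotxx_ge0 ?sqr_ge0.
have K0 : 0 <= K := ler0n _ _.
have R0 : 0 <= Rr by rewrite addr_ge0 ?sqr_ge0.
have P0 : 0 <= K * (n * g) by rewrite mulr_ge0 // mulr_ge0 // ltW.
have H1 : (K * (n * g)) ^+ 2 <= (dot y ystar + b * bstar) ^+ 2.
  by rewrite lerXn2r ?nnegrE //; exact: le_trans C1.
have H2 : (dot y y + b ^+ 2) * U <= K * Rr * U by rewrite ler_wpM2r.
have -> : U / n ^+ 2 * (Rr / g ^+ 2) = (U * Rr) / ((n * g) ^+ 2).
  by field; rewrite ?gt_eqF //; apply/andP; split; rewrite gt_eqF.
rewrite ler_pdivlMr ?exprn_gt0 ?mulr_gt0 //.
have [->|Kn0] := eqVneq K 0; first by rewrite mul0r mulr_ge0.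
have Kp : 0 < K by rewrite lt_def Kn0 K0.
rewrite -(ler_pM2l Kp).
have -> : K * (K * (n * g) ^+ 2) = (K * (n * g)) ^+ 2 by ring.
lra.
Qed.
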